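(* Let $X\subset A^+$ be a finite set. Then $X$ is synchronized if and only if its degree $d(X)$ equals $1$.
   Context: A word $x\in A^*$ is synchronizing for $X$ if for all $u,v\in A^*$, $uxv\in X^*$ implies $ux\in X^*$ and $xv\in X^*$. $X$ is synchronized if there is a synchronizing word $x\in X^*$. The flower automaton of $X$ has states $\{(u,v)\in A^+\times A^+\mid uv\in X\}\cup\{\omega\}$, $\omega=(1,1)$ initial and terminal, and edges $(u,av)\xrightarrow{a}(ua,v)$ ($uav\in X$, $u,v\ne1$), $\omega\xrightarrow{a}(a,v)$ ($av\in X$, $v\ne1$), $(u,a)\xrightarrow{a}\omega$ ($ua\in X$, $u\ne1$), $\omega\xrightarrow{a}\omega$ ($a\in X$). For an automaton $\mathcal{A}$, $\varphi_\mathcal{A}(w)$ is the relation $\{(p,q)\mid$ there is a path $p\xrightarrow{w}q\}$. The rank of a relation $m$ on $Q$ is the least cardinality of a set $R$ with $m=uv$, $u\subseteq Q\times R$, $v\subseteq R\times Q$ (composition $uv=\{(p,q)\mid\exists r,(p,r)\in u,(r,q)\in v\}$). The degree $d(X)$ is the minimum rank of the nonempty relations in the monoid $\varphi_\mathcal{A}(A^* )$, where $\mathcal{A}$ is the flower automaton of $X$. *)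

(* Defs.v *)
From mathcomp Require Import all_boot.
Set Implicit Arguments. Unset Strict Implicit. Unset Printing Implicit Defensive.

Section Flower.
Variable A : finType.
Notation word := (seq A).
Variable X : seq word.

Definition inXstar (w : word) : Prop :=
  exists s : seq word, all (fun x => x \in X) s /\ flatten s = w.

Definition synchronizing (x : word) : Prop :=
  forall u v : word, inXstar (u ++ x ++ v) -> inXstar (u ++ x) /\ inXstar (x ++ v).

Definition synchronized : Prop := exists x, inXstar x /\ synchronizing x.

(* Flower automaton: states are pairs (u,v), plus omega = ([::],[::]). *)
Definition state := (word * word)%type.
Definition omega : state := ([::], [::]).
Definition is_state (p : state) : Prop :=
  p = omega \/ (p.1 != [::] /\ p.2 != [::] /\ p.1 ++ p.2 \in X).

Inductive edge : state -> A -> state -> Prop :=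
| edge_mid u a v : u != [::] -> v != [::] -> u ++ a :: v \in X ->
    edge (u, a :: v) a (rcons u a, v)
| edge_out a v : v != [::] -> a :: v \in X -> edge omega a ([:: a], v)
| edge_in u a : u != [::] -> rcons u a \in X -> edge (u, [:: a]) a omega
| edge_loop a : [:: a] \in X -> edge omega a omega.

Fixpoint phi (w : word) (p q : state) : Prop :=
  match w with
  | [::] => p = q /\ is_state p
  | a :: w' => exists r, edge p a r /\ phi w' r q
  end.

Definition has_rank_le (m : state -> state -> Prop) (k : nat) : Prop :=
  exists (u : state -> 'I_k -> Prop) (v : 'I_k -> state -> Prop),
    forall p q, m p q <-> exists r, u p r /\ v r q.

Definition is_rank (m : state -> state -> Prop) (k : nat) : Prop :=
  has_rank_le m k /\ forall j, has_rank_le m j -> k <= j.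

Definition nonempty_rel (m : state -> state -> Prop) : Prop := exists p q, m p q.

Definition is_degree (d : nat) : Prop :=
  (exists w, nonempty_rel (phi w) /\ is_rank (phi w) d) /\
  forall w k, nonempty_rel (phi w) -> is_rank (phi w) k -> d <= k.

End Flower.

(* Main.v *)
Require Import Defs.
From mathcomp Require Import all_boot zify.
From Stdlib Require Import Lia.
Set Implicit Arguments. Unset Strict Implicit.

Section Proofs.
Variable A : finType.
Variable X : seq (seq A).
Hypothesis HX : forall x, x \in X -> x != [::].

Lemma edge_states p a r : edge X p a r -> is_state X p /\ is_state X r.
Proof.
case=> [u b v Hu Hv Hm|b v Hv Hm|u b Hu Hm|b Hm]; rewrite /is_state /=.
- split; right; (split; [|split]) => //=; first by case: (u) Hu.
  by rewrite cat_rcons.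
- by split; [left|right].
- split; [right|left] => //; split => //; by rewrite cats1.
- by split; left.
Qed.

Lemma phi_state_l w p q : phi X w p q -> is_state X p.
Proof.
case: w => [|a w] /= ; first by case=> ->.
by case=> r [/edge_states [] ].
Qed.

Lemma phi_cat s1 s2 p q :
  phi X (s1 ++ s2) p q <-> exists r, phi X s1 p r /\ phi X s2 r q.
Proof.
elim: s1 p => [|a s1 IH] p /=.
- split; first by move=> H; exists p; split => //; split => //; exact: phi_state_l H.
  by case=> r [[-> _] H].
- split.
  + case=> r [He /IH [r' [H1 H2]]]. exists r'; split => //. by exists r.
  + case=> r' [[r [He H1]] H2]. exists r; split => //. apply/IH. by exists r'.
Qed.

Lemma petal u pre v : pre != [::] -> v != [::] -> pre ++ u ++ v \in X ->
  phi X u (pre, u ++ v) (pre ++ u, v).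
Proof.
elim: u pre => [|a u IH] pre Hp Hv Hm /=.
- by rewrite cats0; split => //; right.
- exists (rcons pre a, u ++ v); split.
  + apply: edge_mid => //; by case: (u) Hv.
  + have -> : pre ++ a :: u = rcons pre a ++ u by rewrite cat_rcons.
    apply: IH => //; first by case: (pre) Hp.
    by rewrite cat_rcons.
Qed.

Lemma Rpath p : is_state X p -> phi X p.2 p (omega A).
Proof.
case=> [->|[H1 [H2 H3]]]; first by split => //; left.
case: p H1 H2 H3 => u v /= H1 H2 H3.
case/lastP: v H2 H3 => [//|v a] _ H3.
rewrite -cats1; apply/phi_cat; exists (u ++ v, [:: a]); split.
- have := @petal v u [:: a] H1 isT; apply; by rewrite cats1.
- exists (omega A); split; last by split => //; left.
  apply: edge_in; first by case: (u) H1.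
  by rewrite -cats1 -catA cats1.
Qed.

Lemma Lpath q : is_state X q -> phi X q.1 (omega A) q.
Proof.
case=> [->|[H1 [H2 H3]]]; first by split => //; left.
case: q H1 H2 H3 => [[//|a u] v] /= _ H2 H3.
exists ([:: a], u ++ v); split.
- apply: edge_out => //; by case: (u) H2.
- by have := @petal u [:: a] v isT H2 H3.
Qed.

Lemma inXstar_nil : inXstar X [::].
Proof. by exists [::]. Qed.

Lemma inXstar_cat u v : inXstar X u -> inXstar X v -> inXstar X (u ++ v).
Proof.
case=> [s [Hs <-]] [t [Ht <-]]; exists (s ++ t); split.
- by rewrite all_cat Hs Ht.
- by rewrite flatten_cat.
Qed.

Lemma inXstar_X y : y \in X -> inXstar X y.
Proof. move=> Hy; exists [:: y]; by rewrite /= Hy cats0. Qed.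

Lemma state_Xstar q : is_state X q -> inXstar X (q.1 ++ q.2).
Proof. case=> [->|[_ [_ H]]]; [exact: inXstar_nil| exact: inXstar_X]. Qed.

Lemma Xstar_phi w : inXstar X w -> phi X w (omega A) (omega A).
Proof.
case=> s [Hs <-]; elim: s Hs => [|y s IH] /=; first by split => //; left.
case/andP=> Hy Hs; apply/phi_cat; exists (omega A); split; last exact: IH.
have := HX Hy; case: y Hy => [//|a y] Hy _.
case: y Hy => [|b y] Hy.
- exists (omega A); split; [exact: edge_loop | by split => //; left].
have Hq : is_state X ([:: a], b :: y) by right.
have := Rpath Hq; have := Lpath Hq => /= H1 H2.
by apply/(@phi_cat [:: a] (b :: y)); exists ([:: a], b :: y).
Qed.

Lemma phi_char w p q : phi X w p q ->
  (exists z, inXstar X z /\ w = p.2 ++ z ++ q.1) \/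
  (exists u1 v2, u1 != [::] /\ p = (u1, w ++ v2) /\ q = (u1 ++ w, v2) /\
     u1 ++ w ++ v2 \in X).
Proof.
elim: w p => [|a w IH] p /=.
- case=> <- [->|[H1 [H2 H3]]].
  + left; exists [::]; split => //; exact: inXstar_nil.
  + right; exists p.1, p.2; rewrite cats0 /=.
    by split => //; split; [case: (p) | split; [case: (p)|]].
- case=> r [He Hr]; case: He Hr => [u b v Hu Hv Hm|b v Hv Hm|u b Hu Hm|b Hm] Hr.
  + case: (IH _ Hr) => [[z [Hz ->]]|[u1 [v2 [H1 [[E1 E2] [E3 E4]]]]]].
    * by left; exists z.
    * right; exists u; exists v2; split => //; rewrite E2; split => //.
      by rewrite E3 -E1 cat_rcons; split => //; rewrite -E2.
  + case: (IH _ Hr) => [[z [Hz ->]]|[u1 [v2 [H1 [[E1 E2] [E3 E4]]]]]].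
    * left; exists ((b :: v) ++ z); split; last by rewrite /= catA.
      apply: inXstar_cat => //; exact: inXstar_X.
    * left; exists [::]; split; first exact: inXstar_nil.
      by rewrite E3 -E1.
  + case: (IH _ Hr) => [[z [Hz ->]]|[u1 [v2 [H1 [[E1 E2] [E3 E4]]]]]].
    * by left; exists z.
    * by rewrite -E1 in H1.
  + case: (IH _ Hr) => [[z [Hz ->]]|[u1 [v2 [H1 [[E1 E2] [E3 E4]]]]]].
    * left; exists ([:: b] ++ z); split => //.
      apply: inXstar_cat => //; exact: inXstar_X.
    * by rewrite -E1 in H1.
Qed.

Lemma phi_Xstar w : phi X w (omega A) (omega A) -> inXstar X w.
Proof.
case/phi_char => [[z [Hz ->]]|[u1 [v2 [H1 [[E1 _] _]]]]]; last by rewrite -E1 in H1.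
by rewrite /= cats0.
Qed.

Lemma phi_mk p z q : is_state X p -> is_state X q -> inXstar X z ->
  phi X (p.2 ++ z ++ q.1) p q.
Proof.
move=> Hp Hq Hz; apply/phi_cat; exists (omega A); split; first exact: Rpath.
apply/phi_cat; exists (omega A); split; [exact: Xstar_phi | exact: Lpath].
Qed.


Lemma size_le_flatten y : y \in X -> size y <= size (flatten X).
Proof.
elim: X y => [//|z Z IH] y /=; rewrite in_cons size_cat.
case/orP=> [/eqP ->|/IH H]; first exact: leq_addr.
exact: leq_trans H (leq_addl _ _).
Qed.

Lemma state_size p : is_state X p -> size (p.1 ++ p.2) <= size (flatten X).
Proof. case=> [->//|[_ [_ H]]]; exact: size_le_flatten. Qed.

Lemma sync_cat x y : synchronizing X x -> inXstar X y -> synchronizing X (x ++ y).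
Proof.
move=> Hs Hy u v; rewrite -!catA => /Hs [H1 H2]; split => //.
rewrite catA; exact: inXstar_cat.
Qed.

Lemma rank1_prod (m : state A -> state A -> Prop) p q p' q' :
  has_rank_le m 1 -> m p q -> m p' q' -> m p q'.
Proof.
case=> U [V H] /H [r [Ur _]] /H [r' [_ Vr]]; apply/H; exists r; split => //.
by rewrite (ord1 r) -(ord1 r').
Qed.

Lemma split_cat (a b c d : seq A) : a ++ b = c ++ d -> size b = size d -> a = c /\ b = d.
Proof.
move=> E Hs; have Ha : size a = size c.
  by have := congr1 size E; rewrite !size_cat Hs => /eqP; rewrite eqn_add2r => /eqP.
by move/eqP: E; rewrite eqseq_cat // => /andP [/eqP -> /eqP ->].
Qed.

Lemma split_catl (a b c d : seq A) : a ++ b = c ++ d -> size a = size c -> a = c /\ b = d.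
Proof. by move=> E Ha; move/eqP: E; rewrite eqseq_cat // => /andP [/eqP -> /eqP ->]. Qed.

Lemma phi_state_r w p q : phi X w p q -> is_state X q.
Proof.
elim: w p => [|a w IH] p /=; first by case=> <-.
by case=> r [_ /IH].
Qed.

Lemma state_size2 p : is_state X p -> size p.2 <= size (flatten X).
Proof. move/state_size; rewrite size_cat; apply: leq_trans; exact: leq_addl. Qed.

Lemma state_size1 p : is_state X p -> size p.1 <= size (flatten X).
Proof. move/state_size; rewrite size_cat; apply: leq_trans; exact: leq_addr. Qed.

Lemma arith1 (a b c : nat) : 0 < a -> a + (b + (b + (b + b)) + c) <= b -> False.
Proof. lia. Qed.

Section Key.
Variable x : seq A.
Hypothesis Hsx : synchronizing X x.
Hypothesis Hx : inXstar X x.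
Hypothesis Hlen : size (flatten X) <= size x.
Let w := x ++ x ++ x ++ x.

Lemma key_char p q : phi X w p q -> exists z, inXstar X z /\ w = p.2 ++ z ++ q.1.
Proof.
case/phi_char => // [[u1 [v2 [H1 [_ [_ H4]]]]]].
have := size_le_flatten H4; rewrite !size_cat => H.
have : size u1 > 0 by case: (u1) H1.
have := leq_trans H Hlen; rewrite /w => H5 H6; exfalso; exact: (arith1 H6 H5).
Qed.

Lemma stepA p q : phi X w p q -> exists s, x = p.2 ++ s /\ inXstar X (s ++ x).
Proof.
move=> H; have [z [Hz E]] := key_char H.
have Hp := phi_state_l H; have Hq := phi_state_r H.
have Hs : size p.2 <= size x := leq_trans (state_size2 Hp) Hlen.
pose t0 := take (size p.2) x; pose s := drop (size p.2) x.
have Ew : w = t0 ++ (s ++ x ++ x ++ x) by rewrite /w /t0 /s [RHS]catA cat_take_drop.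
have [E1 E2] := split_catl (etrans (esym Ew) E) (size_takel Hs).
exists s; split; first by rewrite -E1 cat_take_drop.
have : inXstar X (z ++ q.1 ++ q.2) by apply: inXstar_cat => //; exact: state_Xstar.
rewrite catA -E2 -!catA => /Hsx [] //.
Qed.

Lemma stepB p q : phi X w p q -> exists t, x = t ++ q.1 /\ inXstar X (x ++ t).
Proof.
move=> H; have [z [Hz E]] := key_char H.
have Hp := phi_state_l H; have Hq := phi_state_r H.
have Hs : size q.1 <= size x := leq_trans (state_size1 Hq) Hlen.
pose t := take (size x - size q.1) x; pose t2 := drop (size x - size q.1) x.
have St : size t2 = size q.1 by rewrite size_drop subKn.
have Ew : w = (x ++ x ++ x ++ t) ++ t2 by rewrite /w /t /t2 -!catA cat_take_drop.
rewrite catA in E.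
have [E1 E2] := split_cat (etrans (esym Ew) E) St.
exists t; split; first by rewrite -E2 cat_take_drop.
have : inXstar X (p.1 ++ p.2 ++ z) by rewrite catA; apply: inXstar_cat => //; exact: state_Xstar.
rewrite -E1.
have -> : p.1 ++ x ++ x ++ x ++ t = (p.1 ++ x ++ x) ++ x ++ t by rewrite -!catA.
by move=> /Hsx [].
Qed.

Lemma key_prod p q p' q' : phi X w p q -> phi X w p' q' -> phi X w p q'.
Proof.
move=> H H'; have [s [Es Hs]] := stepA H; have [t [Et Ht]] := stepB H'.
have -> : w = p.2 ++ ((s ++ x) ++ (x ++ t)) ++ q'.1.
  rewrite /w; transitivity ((p.2 ++ s) ++ x ++ x ++ (t ++ q'.1)).
    by rewrite -Es -Et.
  by rewrite -!catA.
apply: phi_mk; [exact: phi_state_l H| exact: phi_state_r H'|exact: inXstar_cat].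
Qed.

End Key.
End Proofs.

Lemma rank_pos (A : finType) (m : state A -> state A -> Prop) k :
  nonempty_rel m -> has_rank_le m k -> 0 < k.
Proof.
case=> p [q H] [U [V E]]; case: k U V E => [|k] // U V E.
by have [r _] := (E p q).1 H; case: r.
Qed.

Theorem mainTheorem12 (A : finType) (X : seq (seq A))
  (HX : forall x, x \in X -> x != [::]) :
  synchronized X <-> is_degree X 1.
Proof.
split.
- case=> x0 [Hx0 Hs0].
  have HF : inXstar X (flatten X) by exists X; split => //; apply/allP.
  pose x := x0 ++ flatten X.
  have Hsx : synchronizing X x := sync_cat Hs0 HF.
  have Hx : inXstar X x := inXstar_cat Hx0 HF.
  have Hlen : size (flatten X) <= size x by rewrite /x size_cat leq_addl.
  pose w := x ++ x ++ x ++ x.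
  have Hne : nonempty_rel (phi X w).
    exists (omega A), (omega A); apply: Xstar_phi => //.
    by rewrite /w; do 3! apply: inXstar_cat => //.
  split; last by move=> w' k Hn [Hk _]; exact: rank_pos Hn Hk.
  exists w; split => //; split; last by move=> j Hj; exact: rank_pos Hne Hj.
  exists (fun p (_ : 'I_1) => exists q, phi X w p q).
  exists (fun (_ : 'I_1) q => exists p, phi X w p q).
  move=> p q; split.
  + by move=> H; exists ord0; split; [exists q | exists p].
  + case=> r [[q0 H1] [p0 H2]]; exact: (key_prod HX Hsx Hlen H1 H2).
- case=> [[w [[p [q Hpq]] [Hr _]]] _].
  have Hp := phi_state_l Hpq; have Hq := phi_state_r Hpq.
  exists (p.1 ++ w ++ q.2); split.
    apply: phi_Xstar; apply/phi_cat; exists p; split; first exact: Lpath.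
    by apply/phi_cat; exists q; split => //; exact: Rpath.
  move=> u v /(Xstar_phi HX).
  case/phi_cat=> r0 [H0 /phi_cat [r3 [/phi_cat [r1 [H1 /phi_cat [r2 [H2 H3]]]] H4]]].
  split; apply: phi_Xstar.
  + apply/phi_cat; exists r0; split => //.
    apply/phi_cat; exists r1; split => //.
    apply/phi_cat; exists q; split; last exact: Rpath.
    exact: rank1_prod Hr H2 Hpq.
  + apply/phi_cat; exists r3; split => //.
    apply/phi_cat; exists p; split; first exact: Lpath.
    apply/phi_cat; exists r2; split => //.
    exact: rank1_prod Hr Hpq H2.
Qed.
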